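(* Let $n\ge 4$, let $\emptyset\ne S\subseteq V$, and let $x=(i,j)$ and $y=(i',j')$ be distinct vertices of $K_n\times K_n$. Let $a_r=|L_r\cap S|$ for $r\in\{i,i'\}$ and $b_s=|L^s\cap S|$ for $s\in\{j,j'\}$. (1) If $x,y$ lie in the same horizontal layer (i.e. $j=j'$), then $\Delta_S(x,y)=a_i+a_{i'}+|\{x,y\}\cap S|$. (2) If $x,y$ lie in the same vertical layer (i.e. $i=i'$), then $\Delta_S(x,y)=b_j+b_{j'}+|\{x,y\}\cap S|$. (3) If $x,y$ lie in different layers (i.e. $i\ne i'$ and $j\ne j'$), and $z_1=(i',j)$, $z_2=(i,j')$, then $\Delta_S(x,y)=a_i+a_{i'}+b_j+b_{j'}-|\{x,y\}\cap S|-2|\{z_1,z_2\}\cap S|$.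
   Context: $K_n\times K_n$ is the direct product of two complete graphs on $n$ vertices: vertex set $V=[n]\times[n]$ with $[n]=\{1,\dots,n\}$, and $(i,j)$ adjacent to $(i',j')$ iff $i\ne i'$ and $j\ne j'$; $d$ denotes its graph distance. For $i,j\in[n]$, the vertical layer is $L_i=\{(i,j):j\in[n]\}$ and the horizontal layer is $L^j=\{(i,j):i\in[n]\}$. For vertices $x,y,z$ and $S\subseteq V$, $\Delta_z(x,y)=|d(x,z)-d(y,z)|$ and $\Delta_S(x,y)=\sum_{z\in S}\Delta_z(x,y)$. *)

(* Defs.v *)
From mathcomp Require Import all_boot all_order all_algebra.
Set Implicit Arguments. Unset Strict Implicit. Unset Printing Implicit Defensive.

(* Vertices of K_n x K_n: pairs of indices in 'I_n (0-indexed version of [n]). *)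
Definition vert (n : nat) := ('I_n * 'I_n)%type.

Definition adjKK (n : nat) : rel (vert n) :=
  fun u v => (u.1 != v.1) && (u.2 != v.2).

Definition walk_len (T : finType) (e : rel T) (x y : T) (k : nat) : bool :=
  [exists p : k.-tuple T, path e x p && (last x p == y)].

(* Graph distance: least length of a walk from x to y (shortest walks have
   length < #|T|); equals #|T| if y is unreachable (never happens here). *)
Definition gdist (T : finType) (e : rel T) (x y : T) : nat :=
  \big[minn/#|T|]_(k < #|T| | walk_len e x y k) k.

Definition dKK (n : nat) (x y : vert n) : nat := gdist (@adjKK n) x y.

Definition DeltaZ (n : nat) (z x y : vert n) : nat :=
  `|(Posz (dKK x z)) - (Posz (dKK y z))|%N.

Definition DeltaS (n : nat) (S : {set vert n}) (x y : vert n) : nat :=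
  \sum_(z in S) DeltaZ z x y.

Definition Lvert (n : nat) (i : 'I_n) : {set vert n} := [set v | v.1 == i].
Definition Lhor (n : nat) (j : 'I_n) : {set vert n} := [set v | v.2 == j].

(* Main.v *)
Require Import Defs.
From mathcomp Require Import all_boot all_order all_algebra.
From mathcomp Require Import zify ring.
Import GRing.Theory Num.Theory.
Local Open Scope ring_scope.

Lemma bigmin_le (I : eqType) (r : seq I) (P : pred I) (F : I -> nat) d i0 :
  i0 \in r -> P i0 -> (\big[minn/d]_(i <- r | P i) F i <= F i0)%N.
Proof.
elim: r => // h t IH; rewrite inE big_cons; case/orP => [/eqP <-|hin] hp.
  by rewrite hp geq_minl.
case: ifP => _; last exact: IH.
exact: leq_trans (geq_minr _ _) (IH hin hp).
Qed.

Lemma gdist_eq (T : finType) (e : rel T) x y k : (k < #|T|)%N ->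
  walk_len e x y k -> (forall m, (m < k)%N -> ~~ walk_len e x y m) ->
  gdist e x y = k.
Proof.
move=> hk hw hm; apply/eqP; rewrite eqn_leq; apply/andP; split.
  rewrite /gdist; apply: (@bigmin_le _ _ _ (fun i : 'I_#|T| => nat_of_ord i) _ (Ordinal hk)) => //.
  exact: mem_index_enum.
apply: (big_ind (fun v => (k <= v)%N)); first exact: ltnW.
  by move=> a b ha hb; rewrite leq_min ha hb.
move=> m hw'; rewrite leqNgt; apply/negP => hlt.
by move: (hm m hlt); rewrite hw'.
Qed.

Lemma walk0 (T : finType) (e : rel T) x y : walk_len e x y 0 = (x == y).
Proof.
apply/existsP/eqP.
  by case=> p /andP[_ /eqP]; rewrite tuple0.
by move=> <-; exists [tuple]; rewrite /= eqxx.
Qed.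

Lemma walk1 (T : finType) (e : rel T) x y : walk_len e x y 1 = e x y.
Proof.
apply/existsP/idP.
  by case=> -[[|a [|b s]] //= _] /andP[/andP[h _] /eqP <-].
by move=> h; exists [tuple y]; rewrite /= h eqxx.
Qed.

Lemma walk2 (T : finType) (e : rel T) x y w : e x w -> e w y ->
  walk_len e x y 2.
Proof.
by move=> h1 h2; apply/existsP; exists [tuple w; y]; rewrite /= h1 h2 eqxx.
Qed.

Lemma avoid2 n (a b : 'I_n) : (3 <= n)%N -> exists c : 'I_n, (c != a) && (c != b).
Proof.
move=> hn.
have : ~: [set a; b] != set0.
  rewrite -card_gt0 cardsCs setCK card_ord.
  have := cards2 a b; have : (#|[set a; b]| <= 2)%N.
    by rewrite cards2; case: (a != b).
  lia.
case/set0Pn=> c; rewrite !inE negb_or => h; by exists c.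
Qed.

Lemma dKKE n (hn : (3 <= n)%N) (u v : vert n) :
  dKK u v = if u == v then 0%N else if adjKK u v then 1%N else 2%N.
Proof.
have hT : (2 < #|{: vert n}|)%N.
  rewrite card_prod card_ord; nia.
rewrite /dKK; case: eqP => [->|huv].
  by apply: gdist_eq; [exact: leq_ltn_trans (leq0n 2) hT | rewrite walk0 eqxx | by []].
case: ifP => hadj.
  apply: gdist_eq; [exact: leq_ltn_trans (isT : (1 <= 2)%N) hT | by rewrite walk1 | ].
  by case=> // _; rewrite walk0; apply/eqP.
apply: gdist_eq; first exact: hT; last first.
  case=> [|[|m]] // _; first by rewrite walk0; apply/eqP.
  by rewrite walk1 hadj.
have [c1 /andP[h1 h2]] := @avoid2 n u.1 v.1 hn.
have [c2 /andP[h3 h4]] := @avoid2 n u.2 v.2 hn.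
apply: (@walk2 _ _ _ _ (c1, c2)); rewrite /adjKK /=.
  by rewrite eq_sym h1 eq_sym h3.
by rewrite h2 h4.
Qed.

Lemma cardIS n (S A : {set vert n}) :
  (\sum_(z in S) ((z \in A) : nat))%N = #|A :&: S|.
Proof.
rewrite -sum1_card big_mkcond /= [RHS]big_mkcond /=; apply: eq_bigr => z _.
by rewrite in_setI; case: (z \in A); case: (z \in S).
Qed.

Ltac kill := repeat match goal with
 | H : is_true (?a != ?a) |- _ => by rewrite eqxx in H
 | H : is_true (?a != ?b) |- _ =>
     let H' := fresh in
     have H' : (b == a) = false by rewrite eq_sym (negbTE H);
     rewrite ?(negbTE H) ?H'; clear H H'
 end.

Theorem mainTheorem2 (n : nat) (hn : (4 <= n)%N) (S : {set vert n})
  (hS : S != set0) (i j i' j' : 'I_n) (hxy : (i, j) != (i', j')) :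
  let x : vert n := (i, j) in
  let y : vert n := (i', j') in
  let a r := #|Lvert r :&: S| in
  let b s := #|Lhor s :&: S| in
  let cxy := #|[set x; y] :&: S| in
  [/\ j = j' -> DeltaS S x y = (a i + a i' + cxy)%N,
      i = i' -> DeltaS S x y = (b j + b j' + cxy)%N &
      i != i' -> j != j' ->
        let z1 : vert n := (i', j) in
        let z2 : vert n := (i, j') in
        (DeltaS S x y)%:Z =
          (a i)%:Z + (a i')%:Z + (b j)%:Z + (b j')%:Z - cxy%:Z
          - 2 * (#|[set z1; z2] :&: S|)%:Z].
Proof.
have hn3 : (3 <= n)%N by lia.
move=> x y a b cxy; split.
- move=> ejj; subst j'.
  have hii : i != i' by apply: contraNneq hxy => ->.
  rewrite /DeltaS /a /cxy -!cardIS -!big_split /=; apply: eq_bigr => -[k l] _.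
  rewrite /DeltaZ /x /y !dKKE // /adjKK /Lvert !inE !xpair_eqE /=.
  case: (eqVneq k i) => [?|?]; case: (eqVneq k i') => [?|?];
  case: (eqVneq l j) => [?|?]; subst; kill; rewrite ?eqxx; kill; by [].
- move=> eii; subst i'.
  have hjj : j != j' by apply: contraNneq hxy => ->.
  rewrite /DeltaS /b /cxy -!cardIS -!big_split /=; apply: eq_bigr => -[k l] _.
  rewrite /DeltaZ /x /y !dKKE // /adjKK /Lhor !inE !xpair_eqE /=.
  case: (eqVneq k i) => [?|?];
  case: (eqVneq l j) => [?|?]; case: (eqVneq l j') => [?|?]; subst; kill; rewrite ?eqxx; kill; by [].
- move=> hii hjj z1 z2.
  have E : (\sum_(z in S) (DeltaZ z x y + (z \in [set x; y]) + (z \in [set z1; z2]) + (z \in [set z1; z2])))%N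
    = (\sum_(z in S) ((z \in Lvert i) + (z \in Lvert i') + (z \in Lhor j) + (z \in Lhor j')))%N.
    apply: eq_bigr => -[k l] _.
    rewrite /DeltaZ /x /y /z1 /z2 !dKKE // /adjKK /Lhor /Lvert !inE !xpair_eqE /=.
    case: (eqVneq k i) => [?|?]; case: (eqVneq k i') => [?|?];
    case: (eqVneq l j) => [?|?]; case: (eqVneq l j') => [?|?]; subst; kill; rewrite ?eqxx; kill; by [].
  rewrite !big_split /= !cardIS in E.
  rewrite /DeltaS /a /b /cxy.
  move: E; set D := (\sum_(_ in _) _)%N.
  move=> /(congr1 Posz); rewrite !PoszD => E; rewrite -E; ring.
Qed.
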